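(* Let $k$ be a positive integer and let $m>0$. Let $G$ be a bipartite graph with parts $A$ and $B$ that does not contain $K_{k,k}$ as a subgraph, and assume that $d_G(u)\leq m$ for all $u\in A$. Then $G$ has a spanning subgraph $G'$ such that $e(G')\geq e(G)/(k+1)$ and $d_{G'}(u,u')\leq k\,m^{1-1/k}$ for any two distinct $u,u'\in A$.
   Context: $d_G(u)$ is the degree of $u$ in $G$; $d_G(u,u')$ is the number of common neighbours of $u$ and $u'$ in $G$ (the codegree). *)

(* Defs.v *)
From HB Require Import structures.
From mathcomp Require Import all_boot all_order all_algebra.
From mathcomp Require Import reals exp.
Set Implicit Arguments. Unset Strict Implicit. Unset Printing Implicit Defensive.
Import Order.TTheory GRing.Theory Num.Theory.

(* A bipartite graph with parts A and B is represented by its edge set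
   G : {set A * B}; the edge set of a spanning subgraph is a subset of G. *)

Definition degA (A B : finType) (G : {set A * B}) (u : A) : nat :=
  #|[set v : B | (u, v) \in G]|.

Definition codegA (A B : finType) (G : {set A * B}) (u u' : A) : nat :=
  #|[set v : B | ((u, v) \in G) && ((u', v) \in G)]|.

Definition contains_Kst (A B : finType) (G : {set A * B}) (s t : nat) : Prop :=
  exists (S : {set A}) (T : {set B}),
    [/\ #|S| = s, #|T| = t & forall u v, u \in S -> v \in T -> (u, v) \in G].

(* G contains K_{k,k} as a subgraph (K_{k,k} is connected for k >= 1, so any
   copy has one side in A and the other in B; by symmetry of K_{k,k} this is
   the only case). *)
Definition contains_Kkk (A B : finType) (G : {set A * B}) (k : nat) : Prop :=
  contains_Kst G k k.

(* Main.v *)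
Require Import Defs.
From HB Require Import structures.
From mathcomp Require Import all_boot all_order all_algebra.
From mathcomp Require Import reals exp.
From mathcomp Require Import zify ring lra.
Import Order.TTheory GRing.Theory Num.Theory.

Lemma term_cheb a b n : (a ^ n.+1 * b + b ^ n.+1 * a <= a ^ n.+2 + b ^ n.+2)%N.
Proof.
rewrite (expnS a n.+1) (expnS b n.+1).
set P := a ^ n.+1; set Q := b ^ n.+1.
case: (leqP a b) => h.
  have : (P <= Q)%N by rewrite leq_exp2r.
  move=> hPQ; nia.
have : (Q <= P)%N by rewrite leq_exp2r // ltnW.
move=> hPQ; nia.
Qed.

Lemma cheb (I : finType) (P : {pred I}) (y : I -> nat) n :
  ((\sum_(i in P) y i ^ n.+1) * (\sum_(i in P) y i) <= #|P| * \sum_(i in P) y i ^ n.+2)%N.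
Proof.
have E1 : ((\sum_(i in P) y i ^ n.+1) * (\sum_(i in P) y i) =
   \sum_(i in P) \sum_(j in P) y i ^ n.+1 * y j)%N.
  by rewrite big_distrl /=; apply: eq_bigr => i _; rewrite big_distrr.
have E2 : ((\sum_(i in P) y i ^ n.+1) * (\sum_(i in P) y i) =
   \sum_(i in P) \sum_(j in P) y j ^ n.+1 * y i)%N.
  by rewrite E1 exchange_big.
have E3 : (#|P| * \sum_(i in P) y i ^ n.+2 =
   \sum_(i in P) \sum_(j in P) y i ^ n.+2)%N.
  rewrite big_distrr /=; apply: eq_bigr => i _.
  by rewrite sum_nat_const.
have E4 : (#|P| * \sum_(i in P) y i ^ n.+2 =
   \sum_(i in P) \sum_(j in P) y j ^ n.+2)%N.
  by rewrite E3 exchange_big.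
rewrite -(@leq_pmul2l 2) //.
have -> : (2 * ((\sum_(i in P) y i ^ n.+1) * (\sum_(i in P) y i)) =
  \sum_(i in P) \sum_(j in P) (y i ^ n.+1 * y j + y j ^ n.+1 * y i))%N.
  rewrite mul2n -addnn {1}E1 E2 -big_split /=.
  by apply: eq_bigr => i _; rewrite big_split.
have -> : (2 * (#|P| * \sum_(i in P) y i ^ n.+2) =
  \sum_(i in P) \sum_(j in P) (y i ^ n.+2 + y j ^ n.+2))%N.
  rewrite mul2n -addnn {1}E3 E4 -big_split /=.
  by apply: eq_bigr => i _; rewrite big_split.
apply: leq_sum => i _; apply: leq_sum => j _; exact: term_cheb.
Qed.

Lemma pmean (I : finType) (P : {pred I}) (y : I -> nat) n :
  ((\sum_(i in P) y i) ^ n.+1 <= #|P| ^ n * \sum_(i in P) y i ^ n.+1)%N.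
Proof.
elim: n => [|n IH]; first by rewrite expn0 mul1n; apply: leq_sum => i _; rewrite expn1.
rewrite expnS mulnC.
apply: (leq_trans (leq_mul IH (leqnn _))).
rewrite -mulnA expnS -mulnA (mulnCA #|P|) leq_mul //.
exact: cheb.
Qed.

Lemma ffact_ge j n : ((n - j) ^ j.+1 <= n ^_ j.+1)%N.
Proof.
elim: j n => [|j IH] n; first by rewrite subn0 expn1 ffactn1.
rewrite ffactnS expnS.
apply: leq_mul; first by apply: leq_subr.
have -> : (n - j.+1 = n.-1 - j)%N by case: n => //.
exact: IH.
Qed.

Lemma ffact_le j n : (n ^_ j <= n ^ j)%N.
Proof.
elim: j n => [|j IH] n; first by rewrite ffactn0 expn0.
rewrite ffactnS expnS leq_mul //.
apply: leq_trans (IH _) _; case: j {IH} => [|j]; first by rewrite !expn0.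
by rewrite leq_exp2r // leq_pred.
Qed.

Lemma key (R : realType) (j : nat) (I : finType) (P : {pred I}) (x : I -> nat)
    (M : nat) (m s : R) :
  (#|P|%:R <= m)%R ->
  (forall i, x i <= M)%N ->
  (\sum_(i in P) 'C(x i, j.+1) <= j.+1 * 'C(M, j.+1))%N ->
  (1 <= m -> 1 <= s)%R ->
  (s ^+ j.+2 = m ^+ j.+1)%R ->
  ((0 < M)%N -> (j.+2)%:R * s - 1 < m)%R ->
  ((0 < M)%N -> ((j.+2)%:R * s - 1) * M%:R < (\sum_(i in P) x i)%:R)%R ->
  (\sum_(i in P) x i <= j.+2 * #|P|)%N.
Proof.
move=> ham hxM hC hms hsm hm hXM.
rewrite leqNgt; apply/negP => hX.
set X := (\sum_(i in P) x i)%N in hX hXM.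
set a := #|P| in ham hX.
have XaM : (X <= a * M)%N.
  rewrite /X /a -sum_nat_const; apply: leq_sum => i _; exact: hxM.
have aM : (0 < a * M)%N by apply: leq_trans XaM; apply: leq_ltn_trans hX.
rewrite muln_gt0 in aM; case/andP: aM => a0 M0.
have m1 : (1 <= m)%R by apply: le_trans ham; rewrite ler1n.
have s1 := hms m1.
set Y := (\sum_(i in P) (x i - j))%N.
have hXY : (X <= Y + j * a)%N.
  rewrite /X /Y /a mulnC -sum_nat_const -big_split /=.
  apply: leq_sum => i _; lia.
have h2X : (2 * X <= j.+2 * Y)%N by nia.
have hY : (Y ^ j.+1 <= a ^ j * (j.+1 * M ^ j.+1))%N.
  apply: (@leq_trans (#|P| ^ j * \sum_(i in P) (x i - j) ^ j.+1)%N).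
    exact: pmean.
  rewrite -/a leq_mul2l; apply/orP; right.
  apply: (@leq_trans (\sum_(i in P) 'C(x i, j.+1) * j.+1`!)).
    by apply: leq_sum => i _; rewrite bin_ffact; apply: ffact_ge.
  rewrite -big_distrl /=.
  apply: leq_trans (leq_mul hC (leqnn _)) _.
  rewrite -mulnA bin_ffact leq_mul2l; apply/orP; right; apply: ffact_le.
have hN : ((2 * X) ^ j.+1 <= j.+2 ^ j.+1 * (a ^ j * (j.+1 * M ^ j.+1)))%N.
  apply: leq_trans (_ : (j.+2 * Y) ^ j.+1 <= _)%N.
    by rewrite leq_exp2r.
  by rewrite expnMn leq_mul2l hY orbT.
have hR : ((2 * X%:R) ^+ j.+1 <= (j.+2)%:R ^+ j.+1 * (a%:R ^+ j * ((j.+1)%:R * M%:R ^+ j.+1)) :> R)%R.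
  move: hN; rewrite -(ler_nat R) !natrM !natrX.
  by rewrite (natrM R 2 X).
have e2 : ((j.+2)%:R = (j.+1)%:R + 1 :> R)%R by rewrite natr1.
have t1 : (0 < (j.+2)%:R * s - 1 :> R)%R.
  have : (1 <= (j.+1)%:R :> R)%R by rewrite ler1n.
  rewrite e2; nra.
have Mp : (0 < M%:R :> R)%R by rewrite ltr0n.
have hlt : ((2 * (((j.+2)%:R * s - 1) * M%:R)) ^+ j.+1 < (2 * X%:R) ^+ j.+1 :> R)%R.
  rewrite ltrXn2r //; last by have := hXM M0; lra.
  by apply: mulr_ge0 => //; apply: mulr_ge0; [lra|lra].
have h1 : ((2 * ((j.+2)%:R * s - 1)) ^+ j.+1 < (j.+2)%:R ^+ j.+1 * (a%:R ^+ j * (j.+1)%:R) :> R)%R.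
  have MX : (0 < M%:R ^+ j.+1 :> R)%R by apply: exprn_gt0.
  rewrite -(ltr_pM2r MX).
  rewrite -exprMn -mulrA.
  apply: (lt_le_trans hlt); apply: (le_trans hR).
  by rewrite le_eqVlt; apply/orP; left; apply/eqP; ring.
have h2 : (a%:R ^+ j <= m ^+ j :> R)%R by apply: lerXn2r => //; rewrite ?nnegrE //; lra.
have sp : (0 < s)%R by lra.
have mjs : ((j.+1)%:R * s <= m)%R.
  have := hm M0; rewrite e2; nra.
have h3 : ((j.+1)%:R * m ^+ j <= s ^+ j.+1 :> R)%R.
  rewrite -(ler_pM2l sp) -exprS hsm exprS mulrA.
  apply: ler_wpM2r; first by apply: exprn_ge0; lra.
  by rewrite mulrC.
have h4 : ((j.+2)%:R * s <= 2 * ((j.+2)%:R * s - 1) :> R)%R.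
  have : (2 <= (j.+2)%:R :> R)%R by rewrite ler_nat.
  nra.
have h5 : (((j.+2)%:R * s) ^+ j.+1 <= (2 * ((j.+2)%:R * s - 1)) ^+ j.+1 :> R)%R.
  apply: lerXn2r => //; rewrite ?nnegrE; [apply: mulr_ge0; [exact: ler0n | lra] | lra].
move: h5; rewrite exprMn => h5.
have h6 : ((j.+2)%:R ^+ j.+1 * (a%:R ^+ j * (j.+1)%:R) <= (j.+2)%:R ^+ j.+1 * s ^+ j.+1 :> R)%R.
  apply: ler_wpM2l; first by apply: exprn_ge0.
  apply: le_trans h3; rewrite mulrC; apply: ler_wpM2l => //.
have := lt_le_trans h1 (le_trans h6 h5).
by rewrite ltxx.
Qed.

Lemma card_ind (T : finType) (A : {pred T}) (f : pred T) :
  #|[set y in A | f y]| = (\sum_(y in A) (f y : nat))%N.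
Proof.
rewrite -sum1_card big_mkcond [RHS]big_mkcond /=.
by apply: eq_bigr => y _; rewrite !inE; case: (y \in A); case: (f y).
Qed.

Lemma dcount (I J : finType) (P : {pred I}) (Q : {pred J}) (r : I -> J -> bool) :
  (\sum_(i in P) #|[set j in Q | r i j]| = \sum_(j in Q) #|[set i in P | r i j]|)%N.
Proof.
rewrite (eq_bigr (fun i => \sum_(j in Q) (r i j : nat))%N); last by move=> i _; rewrite card_ind.
rewrite [RHS](eq_bigr (fun j => \sum_(i in P) (r i j : nat))%N); last by move=> j _; rewrite card_ind.
by rewrite exchange_big.
Qed.

Lemma card_pairs (A B : finType) (E : {set A * B}) :
  #|E| = (\sum_u \sum_v (((u, v) \in E) : nat))%N.
Proof.
rewrite -sum1_card big_mkcond pair_bigA /=.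
by apply: eq_bigr => [[u v]] _.
Qed.

Lemma codeg_sym (A B : finType) (H : {set A * B}) u w :
  codegA H u w = codegA H w u.
Proof. by rewrite /codegA; apply: eq_card => v; rewrite !inE andbC. Qed.

Lemma codeg_le_deg (A B : finType) (H G : {set A * B}) u w :
  H \subset G -> (codegA H u w <= degA G u)%N.
Proof.
move=> sHG; apply: subset_leq_card; apply/subsetP => v; rewrite !inE.
by case/andP => h _; apply: (subsetP sHG).
Qed.

Lemma codeg_add (A B : finType) (H : {set A * B}) (u : A) (v : B) (p q : A) :
  p != q -> (codegA (H :|: [set (u, v)]) p q <=
   codegA H p q + (((p == u) && ((q, v) \in H)) || ((q == u) && ((p, v) \in H))))%N.
Proof.
move=> pq; rewrite /codegA.
set c := (_ || _).
apply: (@leq_trans #|[set b | ((p, b) \in H) && ((q, b) \in H)] :|: [set b | (b == v) && c]|).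
  apply: subset_leq_card; apply/subsetP => b; rewrite !inE /= !xpair_eqE.
  case/andP => /orP[hp|/andP[/eqP hp /eqP hb]] /orP[hq|/andP[/eqP hq /eqP hb']].
  - by rewrite hp hq.
  - by subst; rewrite /c !eqxx hp /= !orbT.
  - by subst; rewrite /c !eqxx hq /= !orbT.
  - by subst; rewrite eqxx in pq.
apply: leq_trans (leq_card_setU _ _).1 _.
rewrite leq_add2l; case: c => /=.
  rewrite -(cards1 v); apply: subset_leq_card; apply/subsetP => b; by rewrite !inE andbT.
by rewrite leqNgt; apply/negP => /card_gt0P [b]; rewrite !inE andbF.
Qed.

Lemma sub_of_card (T : finType) (X : {set T}) n :
  (n <= #|X|)%N -> exists Y : {set T}, Y \subset X /\ #|Y| = n.
Proof.
move=> h.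
have : (0 < #|[set Y : {set T} | Y \subset X & #|Y| == n]|)%N by rewrite cards_draws bin_gt0.
case/card_gt0P => Y; rewrite inE => /andP[sY /eqP cY]; by exists Y.
Qed.

Local Open Scope ring_scope.

Theorem lemma3p2 (R : realType) (k : nat) (m : R) (A B : finType)
    (G : {set A * B}) :
  (0 < k)%N -> 0 < m ->
  ~ contains_Kkk G k ->
  (forall u : A, (degA G u)%:R <= m) ->
  exists G' : {set A * B},
    [/\ G' \subset G,
        (#|G|%:R / (k.+1)%:R <= (#|G'|%:R : R)) &
        forall u u' : A, u != u' ->
          (codegA G' u u')%:R <= k%:R * m `^ (1 - k%:R^-1)].
Proof.
move=> k0 m0 noK hdeg.
case: k k0 noK hdeg => [//|k'] _ noK hdeg.
case: k' noK hdeg => [|j] noK hdeg.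
  have G0 : G = set0.
    apply/eqP; rewrite -subset0; apply/subsetP => -[u v] h; exfalso; apply: noK.
    exists [set u], [set v]; split; rewrite ?cards1 //.
    by move=> u' v'; rewrite !inE => /eqP -> /eqP ->.
  exists set0; split; first exact: sub0set.
    by rewrite G0 cards0 mul0r.
  move=> u u' _; rewrite /codegA (_ : [set v | _] = set0) ?cards0.
    by apply: mulr_ge0; [exact: ler0n | exact: powR_ge0].
  by apply/setP => v; rewrite !inE.
set k := j.+2.
set s := m `^ (1 - k%:R^-1).
set t := k%:R * s.
pose Pg (H : {set A * B}) := (H \subset G) &&
  [forall u, [forall u', (u != u') ==> ((codegA H u u')%:R <= t)]].
have P0 : Pg set0.
  rewrite /Pg sub0set /=; apply/forallP => u; apply/forallP => u'; apply/implyP => _.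
  rewrite /codegA (_ : [set v | _] = set0) ?cards0.
    by apply: mulr_ge0; [exact: ler0n | exact: powR_ge0].
  by apply/setP => v; rewrite !inE.
case: (arg_maxnP (fun H : {set A * B} => #|H|) P0) => G' PG' Gmax.
move: (PG'); rewrite /Pg => /andP[sG' /forallP cG'].
have cG u u' : u != u' -> (codegA G' u u')%:R <= t.
  by move=> ne; move/forallP: (cG' u) => /(_ u') /implyP; apply.
have miss u v : (u, v) \in G -> (u, v) \notin G' ->
    exists2 w, (w != u) && ((w, v) \in G') & t - 1 < (codegA G' u w)%:R.
  move=> huv hn.
  set H := G' :|: [set (u, v)].
  have cardH : #|H| = (#|G'|).+1 by rewrite /H setUC cardsU1 hn.
  have sH : H \subset G by rewrite /H subUset sG' sub1set.
  have nPH : ~~ Pg H.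
    by apply/negP => PH; have := Gmax H PH; rewrite /= cardH ltnn.
  move: nPH; rewrite /Pg sH /= => /forallPn [p /forallPn [q]].
  rewrite negb_imply => /andP [pq hpq].
  rewrite -ltNge in hpq.
  have hc := @codeg_add _ _ G' u v p q pq.
  move: hc; rewrite -/H; set c := (_ || _) => hc.
  have hG'pq := cG p q pq.
  have ctrue : c.
    apply/negPn/negP => cf; move: hc; rewrite (negbTE cf) addn0 -(ler_nat R) => hc.
    by have := lt_le_trans hpq (le_trans hc hG'pq); rewrite ltxx.
  have h1 : t - 1 < (codegA G' p q)%:R.
    move: hc; rewrite ctrue /= -(ler_nat R) natrD => hc; lra.
  case/orP: ctrue => /andP [/eqP pu hq].
    by subst p; exists q => //; rewrite hq andbT eq_sym.
  by subst q; exists p; [rewrite hq andbT | rewrite codeg_sym].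
pose Np w := [set v | (w, v) \in G'].
pose S w := [set u | (u != w) && (t - 1 < (codegA G' u w)%:R)].
pose xv w v := #|[set u in S w | (u, v) \in G]|.
have hmiss : (#|G :\: G'| <= \sum_w \sum_(v in Np w) xv w v)%N.
  rewrite card_pairs.
  have -> : (\sum_w \sum_(v in Np w) xv w v =
     \sum_u \sum_v \sum_w ((((w, v) \in G') && (u \in S w) && ((u, v) \in G)) : nat))%N.
    rewrite (eq_bigr (fun w => \sum_v \sum_u ((((w, v) \in G') && (u \in S w) && ((u, v) \in G)) : nat))%N); last first.
      move=> w _; rewrite big_mkcond; apply: eq_bigr => v _.
      rewrite /xv card_ind /Np inE; case: ((w, v) \in G').
        by rewrite big_mkcond; apply: eq_bigr => u _; case: (u \in S w).
      by rewrite big1.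
    rewrite exchange_big /=.
    rewrite (eq_bigr (fun v => \sum_u \sum_w ((((w, v) \in G') && (u \in S w) && ((u, v) \in G)) : nat))%N); last by move=> v _; rewrite exchange_big.
    by rewrite exchange_big.
  apply: leq_sum => u _; apply: leq_sum => v _.
  rewrite inE; case: (boolP ((u, v) \in G')) => hG' //=.
  case: (boolP ((u, v) \in G)) => hG //=.
  have [w /andP [wu wv] hw] := miss u v hG hG'.
  rewrite (bigD1 w) //= wv /S inE eq_sym wu hw /=.
  exact: leq_addr.
have hkeep : #|G'| = (\sum_w #|Np w|)%N.
  rewrite card_pairs; apply: eq_bigr => w _.
  rewrite -sum1_card [RHS]big_mkcond /=; apply: eq_bigr => v _.
  by rewrite /Np inE; case: ((w, v) \in G').
have hw w : (\sum_(v in Np w) xv w v <= k * #|Np w|)%N.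
  apply: (@key R j B (Np w) (xv w) #|S w| m s).
  - apply: le_trans (hdeg w); rewrite ler_nat; apply: subset_leq_card.
    by apply/subsetP => v; rewrite !inE; apply: (subsetP sG').
  - move=> v; apply: subset_leq_card; apply/subsetP => u; rewrite inE.
    by case/andP.
  - pose D := [set Y : {set A} | (Y \subset S w) && (#|Y| == j.+1)].
    pose X v := [set u in S w | (u, v) \in G].
    have E1 v : 'C(xv w v, j.+1) = #|[set Y in D | Y \subset X v]|.
      rewrite /xv -cards_draws; apply: eq_card => Y; rewrite !inE.
      case hY: (Y \subset X v); rewrite /= ?andbT ?andbF //.
      have -> : Y \subset S w.
        apply: subset_trans hY _; apply/subsetP => u; rewrite inE; by case/andP.
      by [].
    rewrite (eq_bigr _ (fun v _ => E1 v)).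
    rewrite (dcount _ _ (Np w) D (fun v Y => Y \subset X v)).
    apply: (@leq_trans (\sum_(Y in D) j.+1)%N).
      apply: leq_sum => Y; rewrite inE => /andP [sY /eqP cY].
      rewrite leqNgt; apply/negP => hgt.
      have [T [sT cT]] := sub_of_card _ _ _ hgt.
      apply: noK; exists (w |: Y), T; split => //.
        rewrite cardsU1 cY.
        have -> : w \notin Y.
          apply/negP => wY; have := subsetP sY _ wY; by rewrite inE eqxx.
        by [].
      move=> u v; rewrite in_setU1 => /orP [/eqP -> | uY] vT;
        have := subsetP sT _ vT; rewrite !inE => /andP [hv hYv].
        exact: (subsetP sG').
      by have := subsetP hYv _ uY; rewrite inE => /andP [].
    by rewrite sum_nat_const /D cards_draws mulnC.
  - move=> m1; rewrite /s -[X in X <= _](powRr0 m); apply: ler_powR => //.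
    rewrite subr_ge0 invf_le1 ?ler1n // ltr0n.
  - have e : (1 - k%:R^-1) * k%:R = (j.+1)%:R :> R.
      rewrite mulrBl mul1r mulVf ?pnatr_eq0 //.
      by rewrite /k -(@natr1 R (j.+1)) addrK.
    rewrite /s -powR_mulrn ?powR_ge0 // -powRrM e powR_mulrn //; lra.
  - move=> /card_gt0P [u]; rewrite inE => /andP [uw hu].
    apply: lt_le_trans hu _.
    apply: le_trans (hdeg u); rewrite ler_nat; exact: codeg_le_deg.
  - move=> /card_gt0P [u0 hu0].
    have E : (\sum_(v in Np w) xv w v = \sum_(u in S w) #|[set v in Np w | (u, v) \in G]|)%N.
      by rewrite /xv (dcount _ _ (S w) (Np w) (fun u v => (u, v) \in G)).
    have cle u : (codegA G' u w <= #|[set v in Np w | (u, v) \in G]|)%N.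
      apply: subset_leq_card; apply/subsetP => v; rewrite !inE => /andP [h1 h2].
      by rewrite h2 (subsetP sG' _ h1).
    rewrite E natr_sum mulr_natr -sumr_const.
    rewrite (bigD1 u0) //= [X in _ < X](bigD1 u0) //=.
    apply: ltr_leD.
      move: hu0; rewrite inE => /andP [_ h]; apply: lt_le_trans h _.
      by rewrite ler_nat.
    apply: ler_sum => u /andP [hu _]; move: hu; rewrite inE => /andP [_ h].
    apply: ltW; apply: lt_le_trans h _; by rewrite ler_nat.
have hG : #|G| = (#|G'| + #|G :\: G'|)%N by rewrite -(cardsID G' G) (setIidPr sG').
have hfin : (#|G| <= k.+1 * #|G'|)%N.
  rewrite hG; apply: leq_trans (leq_add (leqnn _) hmiss) _.
  apply: (@leq_trans (#|G'| + \sum_w k * #|Np w|)%N); first by rewrite leq_add2l; apply: leq_sum => w _; exact: hw.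
  by rewrite -big_distrr /= -hkeep mulSn.
exists G'; split => //.
  by rewrite ler_pdivrMr ?ltr0n // -natrM ler_nat mulnC.
Qed.
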